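(* Let $\alpha\in\mathbb{N}$, let $n\in\mathbb{N}$ with $3\nmid n$ and $n>6\alpha+3$, and let $\mathbb{S}=\langle 6,6\alpha+3,n\rangle$, with Betti elements $\beta_1=\beta_2=12\alpha+6$ and $\beta_3=3n$. Then, with respect to $(6,6\alpha+3,n)$, the factorizations of $\beta_1=\beta_2$ are exactly $(2\alpha+1,0,0)$ and $(0,2,0)$, and the factorizations of $\beta_3$ are exactly $(0,0,3)$ and $\left(\frac{n-k(2\alpha+1)}{2},k,0\right)$ for $k\in\mathbb{N}$ with $k\le\frac{n}{2\alpha+1}$ and $2\mid n-k(2\alpha+1)$.
   Context: $\mathbb{N}=\{0,1,2,\dots\}$. $\langle a_1,\dots,a_e\rangle$ is the set of $\mathbb{N}$-linear combinations of $a_1,\dots,a_e$. A factorization of $a\in\langle a_1,a_2,a_3\rangle$ is a tuple $(\eta_1,\eta_2,\eta_3)\in\mathbb{N}^3$ with $\eta_1a_1+\eta_2a_2+\eta_3a_3=a$. *)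

(* Defs.v *)
From mathcomp Require Import all_boot.

Definition is_factorization (a1 a2 a3 a : nat) (e : nat * nat * nat) : Prop :=
  let: (e1, e2, e3) := e in e1 * a1 + e2 * a2 + e3 * a3 = a.

(* Main.v *)
Require Import Defs.
From mathcomp Require Import all_boot.
From mathcomp Require Import zify.

Theorem theorem9 (alpha n : nat) :
  ~~ (3 %| n) -> 6 * alpha + 3 < n ->
  (forall e : nat * nat * nat,
     is_factorization 6 (6 * alpha + 3) n (12 * alpha + 6) e <->
     (e = (2 * alpha + 1, 0, 0) \/ e = (0, 2, 0))) /\
  (forall e : nat * nat * nat,
     is_factorization 6 (6 * alpha + 3) n (3 * n) e <->
     (e = (0, 0, 3) \/
      exists k : nat, k * (2 * alpha + 1) <= n /\
        2 %| n - k * (2 * alpha + 1) /\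
        e = ((n - k * (2 * alpha + 1)) %/ 2, k, 0))).
Proof.
move=> H3 Hn; split => -[[e1 e2] e3] /=.
- split.
  + have E : e2 * (6 * alpha + 3) = 3 * (e2 * (2 * alpha + 1)) by lia.
    move=> H; rewrite E in H.
    case: e3 H => [|[|e3]] H; last by exfalso; nia.
    * case: e2 E H => [|[|[|e2]]] E H.
      -- left; f_equal; f_equal; lia.
      -- exfalso; lia.
      -- right; f_equal; f_equal; lia.
      -- exfalso; nia.
    * exfalso; lia.
  + case=> -[-> -> ->]; lia.
- split.
  + have E : e2 * (6 * alpha + 3) = 3 * (e2 * (2 * alpha + 1)) by lia.
    move=> H; rewrite E in H.
    case: e3 H => [|[|[|[|e3]]]] H; last (by exfalso; nia); try (exfalso; lia).
    * right; exists e2; split; first lia; split; first lia.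
      f_equal; f_equal; lia.
    * left; have -> : e2 = 0 by nia. have -> : e1 = 0 by lia. done.
  + case=> [[-> -> ->]|[k [Hk [Hd [-> -> ->]]]]]; first lia.
    have E : k * (6 * alpha + 3) = 3 * (k * (2 * alpha + 1)) by lia.
    rewrite E; move: Hk Hd; generalize (k * (2 * alpha + 1)) => m; lia.
Qed.
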